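(* Define: - $I:{}_H\mathcal M\to\mathbb T({}_H\mathcal M)$ by $I(M)=(M,\mathrm{id}_M)$ and $I(f)=f$; - $R:\mathbb T({}_H\mathcal M)\to{}_H\mathcal M^{par}$ by $R(M,T)=(T(M),\pi_{T})$, where $\pi_{T}(h)(m)=T(h\triangleright m)$ for $m\in T(M)$, and $R(f)=f$ on morphisms. Then $I$ and $R$ are fully faithful functors, and the inclusion functor $i:{}_H\mathcal M\to{}_H\mathcal M^{par}$ equals the composite $R\circ I$.
   Context: Throughout, $k$ is a field and $H$ is a Hopf algebra over $k$ with bijective antipode $S$ and Sweedler notation $\Delta(h)=h_{(1)}\otimes h_{(2)}$. A partial $H$-module is a vector space $M$ with linear $\pi:H\to\mathrm{End}_k(M)$ satisfying, for all $h,k\in H$: - $\pi(1_H)=\mathrm{id}$; - $\pi(h)\pi(k_{(1)})\pi(S(k_{(2)}))=\pi(hk_{(1)})\pi(S(k_{(2)}))$; - $\pi(h_{(1)})\pi(S(h_{(2)}))\pi(k)=\pi(h_{(1)})\pi(S(h_{(2)})k)$; - $\pi(h)\pi(S(k_{(1)}))\pi(k_{(2)})=\pi(hS(k_{(1)}))\pi(k_{(2)})$; - $\pi(S(h_{(1)}))\pi(h_{(2)})\pi(k)=\pi(S(h_{(1)}))\pi(h_{(2)}k)$. Morphisms of partial $H$-modules are linear maps commuting with all $\pi(h)$; they form the category ${}_H\mathcal M^{par}$. The inclusion $i$ regards a left $H$-module $M$ as the partial module $\pi(h)(m)=h\triangleright m$. For a left $H$-module $M$ and a linear projection $T$, put $T_h(m)=h_{(1)}\triangleright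 T(S(h_{(2)})\triangleright m)$. $T$ satisfies the c-condition if $T_h\circ T=T\circ T_h$ for all $h$. The category $\mathbb T({}_H\mathcal M)$ is defined as follows: - objects are pairs $(M,T)$ with $M$ a left $H$-module and $T$ a projection satisfying the c-condition; - morphisms $(M,T)\to(N,S)$ are linear maps $f:T(M)\to S(N)$ with $f(T(h\triangleright m))=S(h\triangleright f(m))$ for all $h\in H$, $m\in T(M)$. *)

(* Defs.v *)
From HB Require Import structures.
From mathcomp Require Import all_boot all_order all_algebra.

Set Implicit Arguments.
Unset Strict Implicit.
Unset Printing Implicit Defensive.

Import GRing.Theory.
Local Open Scope ring_scope.

Definition lin (k : fieldType) (U V : lmodType k) (f : U -> V) : Prop :=
  forall (a : k) (u u' : U), f (a *: u + u') = a *: f u + f u'.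

Record proj (k : fieldType) (M : lmodType k) := Proj {
  plin :> {linear M -> M};
  pidem : forall m, plin (plin m) = plin m }.

(* The subspace T(M) = { m | T m = m } of a linear projection T, as a  *)
(* k-vector space in its own right.                                    *)
Section FixSpace.
Variables (k : fieldType) (M : lmodType k) (T : {linear M -> M}).


Definition fixp : {pred M} := fun m => T m == m.

Fact fixp_closed : subsemimod_closed fixp.
Proof.
split; first split.
- by rewrite /in_mem /= /fixp linear0.
- move=> u v; rewrite /in_mem /= /fixp linearD => /eqP -> /eqP ->; exact: eqxx.
- move=> a v; rewrite /in_mem /= /fixp linearZ => /eqP ->; exact: eqxx.
Qed.

HB.instance Definition _ := GRing.isSubmodClosed.Build k M fixp fixp_closed.

Record fixT := FixT { fval :> M; fvalP : fval \in fixp }.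
HB.instance Definition _ := [isSub for fval].
HB.instance Definition _ := [Choice of fixT by <:].
HB.instance Definition _ := [SubChoice_isSubLmodule of fixT by <:].

End FixSpace.

Lemma proj_fixP (k : fieldType) (M : lmodType k) (T : proj M) (m : M) :
  T m \in fixp T.
Proof. by rewrite /in_mem /= /fixp pidem. Qed.

Definition idproj (k : fieldType) (M : lmodType k) : proj M :=
  @Proj k M (idfun : {linear M -> M}) (fun _ => erefl).

Lemma idproj_fixP (k : fieldType) (M : lmodType k) (m : M) :
  m \in fixp (idproj M).
Proof. by rewrite /in_mem /= /fixp. Qed.

Definition mkfixid (k : fieldType) (M : lmodType k) (m : M) : fixT (idproj M) :=
  @FixT k M (idproj M) m (idproj_fixP m).

(* Hopf algebras.  There is no tensor product in MathComp; an element   *)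
(* of H (x) H (resp. H (x) H (x) H) is represented by a finite list of  *)
(* pairs (triples) of simple tensors, i.e. Sweedler notation            *)
(* Delta h = sum_i h1_i (x) h2_i is  Delta h = [:: (h1_i, h2_i); ...].  *)
(* Two lists represent the same tensor iff every bilinear (trilinear)   *)
(* map out of H x H (x H) into any k-vector space V takes the same      *)
(* value on them (universal property of the tensor product).            *)
Section Hopf.
Variables (k : fieldType) (H : algType k).

Definition bilin (V : lmodType k) (phi : H -> H -> V) : Prop :=
  (forall a x x' y, phi (a *: x + x') y = a *: phi x y + phi x' y) /\
  (forall a x y y', phi x (a *: y + y') = a *: phi x y + phi x y').

Definition trilin (V : lmodType k) (phi : H -> H -> H -> V) : Prop :=
  [/\ forall a x x' y z, phi (a *: x + x') y z = a *: phi x y z + phi x' y z,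
      forall a x y y' z, phi x (a *: y + y') z = a *: phi x y z + phi x y' z &
      forall a x y z z', phi x y (a *: z + z') = a *: phi x y z + phi x y z'].

Definition teq2 (s t : seq (H * H)) : Prop :=
  forall (V : lmodType k) (phi : H -> H -> V), bilin phi ->
    \sum_(p <- s) phi p.1 p.2 = \sum_(p <- t) phi p.1 p.2.

Definition teq3 (s t : seq (H * H * H)) : Prop :=
  forall (V : lmodType k) (phi : H -> H -> H -> V), trilin phi ->
    \sum_(p <- s) phi p.1.1 p.1.2 p.2 = \sum_(p <- t) phi p.1.1 p.1.2 p.2.

Record is_hopf (Delta : H -> seq (H * H)) (eps : H -> k) (S : H -> H) : Prop := {
  Delta_lin : forall a h h', teq2 (Delta (a *: h + h'))
                 ([seq (a *: p.1, p.2) | p <- Delta h] ++ Delta h');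
  Delta_coassoc : forall h,
    teq3 [seq (q.1, q.2, p.2) | p <- Delta h, q <- Delta p.1]
         [seq (p.1, q.1, q.2) | p <- Delta h, q <- Delta p.2];
  eps_lin : forall a h h', eps (a *: h + h') = a * eps h + eps h';
  counit_l : forall h, \sum_(p <- Delta h) eps p.1 *: p.2 = h;
  counit_r : forall h, \sum_(p <- Delta h) eps p.2 *: p.1 = h;
  Delta_1 : teq2 (Delta 1) [:: (1, 1)];
  Delta_mul : forall h g, teq2 (Delta (h * g))
                 [seq (p.1 * q.1, p.2 * q.2) | p <- Delta h, q <- Delta g];
  eps_1 : eps 1 = 1;
  eps_mul : forall h g, eps (h * g) = eps h * eps g;
  S_lin : forall a h h', S (a *: h + h') = a *: S h + S h';
  antipode_l : forall h, \sum_(p <- Delta h) S p.1 * p.2 = eps h *: 1;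
  antipode_r : forall h, \sum_(p <- Delta h) p.1 * S p.2 = eps h *: 1 }.

Variables (Delta : H -> seq (H * H)) (S : H -> H).

Record is_hmod (M : lmodType k) (act : H -> M -> M) : Prop := {
  hmod_linl : forall a h h' m, act (a *: h + h') m = a *: act h m + act h' m;
  hmod_linr : forall h, lin (act h);
  hmod_1 : forall m, act 1 m = m;
  hmod_mul : forall h g m, act (h * g) m = act h (act g m) }.

Definition is_hmor (M N : lmodType k) (actM : H -> M -> M) (actN : H -> N -> N)
  (f : M -> N) : Prop :=
  lin f /\ forall h m, f (actM h m) = actN h (f m).

Record is_pmod (P : lmodType k) (pi : H -> P -> P) : Prop := {
  pmod_linl : forall a h h' m, pi (a *: h + h') m = a *: pi h m + pi h' m;
  pmod_linr : forall h, lin (pi h);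
  pmod_1 : forall m, pi 1 m = m;
  pmod_ax1 : forall h g m,
    \sum_(p <- Delta g) pi h (pi p.1 (pi (S p.2) m))
    = \sum_(p <- Delta g) pi (h * p.1) (pi (S p.2) m);
  pmod_ax2 : forall h g m,
    \sum_(p <- Delta h) pi p.1 (pi (S p.2) (pi g m))
    = \sum_(p <- Delta h) pi p.1 (pi (S p.2 * g) m);
  pmod_ax3 : forall h g m,
    \sum_(p <- Delta g) pi h (pi (S p.1) (pi p.2 m))
    = \sum_(p <- Delta g) pi (h * S p.1) (pi p.2 m);
  pmod_ax4 : forall h g m,
    \sum_(p <- Delta h) pi (S p.1) (pi p.2 (pi g m))
    = \sum_(p <- Delta h) pi (S p.1) (pi (p.2 * g) m) }.

Definition is_pmor (P Q : lmodType k) (piP : H -> P -> P) (piQ : H -> Q -> Q)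
  (f : P -> Q) : Prop :=
  lin f /\ forall h m, f (piP h m) = piQ h (f m).

Definition Th (M : lmodType k) (act : H -> M -> M) (T : M -> M) (h : H) (m : M) : M :=
  \sum_(p <- Delta h) act p.1 (T (act (S p.2) m)).

(* objects of T(_H M): (M, T) with M an H-module (assumed separately) and *)
(* T a linear projection satisfying the c-condition.                    *)
Definition ccond (M : lmodType k) (act : H -> M -> M) (T : proj M) : Prop :=
  forall h m, Th act T h (T m) = T (Th act T h m).

Definition piT (M : lmodType k) (act : H -> M -> M) (T : proj M) (h : H)
  (x : fixT T) : fixT T :=
  @FixT k M T (T (act h (fval x))) (proj_fixP T _).

Definition is_Tmor (M N : lmodType k) (actM : H -> M -> M) (actN : H -> N -> N)
  (T : proj M) (T' : proj N) (f : fixT T -> fixT T') : Prop :=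
  lin f /\ forall h (x : fixT T), fval (f (@piT M actM T h x)) = T' (actN h (fval (f x))).

End Hopf.

Arguments piT {k H M} act T h x.
Arguments is_Tmor {k H M N} actM actN T T' f.

Definition Imor (k : fieldType) (M N : lmodType k) (f : M -> N)
  (x : fixT (idproj M)) : fixT (idproj N) := mkfixid (f (fval x)).

Definition Rmor (k : fieldType) (M N : lmodType k) (T : proj M) (T' : proj N)
  (f : fixT T -> fixT T') : fixT T -> fixT T' := f.

Arguments Rmor {k M N} T T' f.
Arguments Imor {k M N} f x.

(* Main.v *)
Require Import Defs.
From HB Require Import structures.
From mathcomp Require Import all_boot all_order all_algebra.
Import GRing.Theory.
Local Open Scope ring_scope.

Set Implicit Arguments.
Unset Strict Implicit.


Lemma fval_sum (k : fieldType) (M : lmodType k) (T : proj M) (I : Type) (s : seq I) (F : I -> fixT T) :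
  fval (\sum_(i <- s) F i) = \sum_(i <- s) fval (F i).
Proof. elim: s => [|a s IH]; first by rewrite !big_nil. by rewrite !big_cons -IH. Qed.

Lemma fval_lin (k : fieldType) (M : lmodType k) (T : proj M) a (x y : fixT T) :
  fval (a *: x + y) = a *: fval x + fval y.
Proof. by []. Qed.


Lemma actDl (k : fieldType) (H : algType k) (M : lmodType k) (act : H -> M -> M) :
  is_hmod act -> forall h h' m, act (h + h') m = act h m + act h' m.
Proof. by move=> hM h h' m; have := hmod_linl hM 1 h h' m; rewrite !scale1r. Qed.

Lemma act0l (k : fieldType) (H : algType k) (M : lmodType k) (act : H -> M -> M) :
  is_hmod act -> forall m, act 0 m = 0.
Proof.
move=> hM m; have := hmod_linl hM 1 0 0 m.
rewrite !scale1r addr0 => E; apply: (addrI (act 0 m)); by rewrite addr0 -E.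
Qed.

Lemma actZl (k : fieldType) (H : algType k) (M : lmodType k) (act : H -> M -> M) :
  is_hmod act -> forall a h m, act (a *: h) m = a *: act h m.
Proof. by move=> hM a h m; have := hmod_linl hM a h 0 m; rewrite addr0 act0l // addr0. Qed.

Lemma act_suml (k : fieldType) (H : algType k) (M : lmodType k) (act : H -> M -> M) :
  is_hmod act -> forall (I : Type) (s : seq I) (F : I -> H) m,
  act (\sum_(i <- s) F i) m = \sum_(i <- s) act (F i) m.
Proof.
move=> hM I s F m; elim: s => [|a s IH]; first by rewrite !big_nil act0l.
by rewrite !big_cons actDl // IH.
Qed.

Lemma linD (k : fieldType) (U V : lmodType k) (f : U -> V) :
  lin f -> forall u u', f (u + u') = f u + f u'.
Proof. by move=> hf u u'; have := hf 1 u u'; rewrite !scale1r. Qed.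

Lemma lin0 (k : fieldType) (U V : lmodType k) (f : U -> V) : lin f -> f 0 = 0.
Proof.
move=> hf; have := hf 1 0 0.
rewrite !scale1r addr0 => E; apply: (addrI (f 0)); by rewrite addr0 -E.
Qed.

Lemma linZ (k : fieldType) (U V : lmodType k) (f : U -> V) :
  lin f -> forall a u, f (a *: u) = a *: f u.
Proof. by move=> hf a u; have := hf a u 0; rewrite addr0 lin0 // addr0. Qed.

Lemma lin_sum (k : fieldType) (U V : lmodType k) (f : U -> V) :
  lin f -> forall (I : Type) (s : seq I) (F : I -> U),
  f (\sum_(i <- s) F i) = \sum_(i <- s) f (F i).
Proof.
move=> hf I s F; elim: s => [|a s IH]; first by rewrite !big_nil lin0.
by rewrite !big_cons linD // IH.
Qed.

Lemma S_linP (k : fieldType) (H : algType k) Delta eps (S : H -> H) :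
  is_hopf Delta eps S -> lin S.
Proof. by move=> hH a u u'; rewrite (S_lin hH). Qed.

Lemma Th_linr (k : fieldType) (H : algType k) Delta (S : H -> H)
  (M : lmodType k) (act : H -> M -> M) (T : proj M) h :
  is_hmod act -> lin (Th Delta S act T h).
Proof.
move=> hM a u u'; rewrite /Th scaler_sumr -big_split /=; apply: eq_bigr => p _.
by rewrite (hmod_linr hM) linearP (hmod_linr hM).
Qed.

Lemma Th_linl (k : fieldType) (H : algType k) Delta eps (S : H -> H)
  (M : lmodType k) (act : H -> M -> M) (T : proj M) :
  is_hopf Delta eps S -> is_hmod act ->
  forall a h h' w, Th Delta S act T (a *: h + h') w
     = a *: Th Delta S act T h w + Th Delta S act T h' w.
Proof.
move=> hH hM a h h' w; rewrite /Th.
rewrite (Delta_lin hH a h h' (phi := fun x y => act x (T (act (S y) w)))).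
  by rewrite big_cat big_map /= scaler_sumr; congr (_ + _); apply: eq_bigr => p _;
     rewrite actZl.
split=> [b x x' y|b x y y'] /=.
  by rewrite (hmod_linl hM).
by rewrite (S_lin hH) (hmod_linl hM) linearP (hmod_linr hM).
Qed.

Lemma coassoc_sum (k : fieldType) (H : algType k) Delta eps (S : H -> H) :
  is_hopf Delta eps S -> forall h (V : lmodType k) (phi : H -> H -> H -> V), trilin phi ->
  \sum_(p <- Delta h) \sum_(q <- Delta p.1) phi q.1 q.2 p.2
  = \sum_(p <- Delta h) \sum_(q <- Delta p.2) phi p.1 q.1 q.2.
Proof.
move=> hH h V phi tphi; have := Delta_coassoc hH h tphi.
by rewrite !big_allpairs_dep.
Qed.

Ltac lintac hH hM :=
  rewrite ?(S_lin hH) ?(hmod_linl hM) ?linearP ?(hmod_linr hM) ?linearP ?(hmod_linr hM)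
          ?linearP ?(hmod_linr hM).

Lemma anti_act (k : fieldType) (H : algType k) Delta eps (S : H -> H)
  (M : lmodType k) (act : H -> M -> M) :
  is_hopf Delta eps S -> is_hmod act -> forall g z,
  \sum_(r <- Delta g) act (S r.1) (act r.2 z) = eps g *: z.
Proof.
move=> hH hM g z; have := congr1 (act^~ z) (antipode_l hH g).
rewrite /= (act_suml hM) (actZl hM) (hmod_1 hM) => <-.
by apply: eq_bigr => r _; rewrite (hmod_mul hM).
Qed.

Lemma lemA (k : fieldType) (H : algType k) Delta eps (S : H -> H)
  (M : lmodType k) (act : H -> M -> M) (T : proj M) :
  is_hopf Delta eps S -> is_hmod act -> forall h z,
  act h (T z) = \sum_(q <- Delta h) Th Delta S act T q.1 (act q.2 z).
Proof.
move=> hH hM h z; symmetry; rewrite /Th.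
have tri : trilin (fun a b c => act a (T (act (S b) (act c z)))).
  by split=> * /=; lintac hH hM.
rewrite (coassoc_sum hH h tri) /=.
transitivity (\sum_(p <- Delta h) act p.1 (T (eps p.2 *: z))).
  apply: eq_bigr => p _.
  by rewrite -(anti_act hH hM) linear_sum (lin_sum (hmod_linr hM p.1)).
transitivity (\sum_(p <- Delta h) act (eps p.2 *: p.1) (T z)).
  by apply: eq_bigr => p _; rewrite linearZ (linZ (hmod_linr hM _)) (actZl hM).
by rewrite -{2}(counit_r hH h) (act_suml hM).
Qed.

Lemma lemB (k : fieldType) (H : algType k) Delta eps (S : H -> H)
  (M : lmodType k) (act : H -> M -> M) (T : proj M) :
  is_hopf Delta eps S -> is_hmod act -> forall h w,
  \sum_(q <- Delta h) act (S q.1) (Th Delta S act T q.2 w) = T (act (S h) w).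
Proof.
move=> hH hM h w.
have tri : trilin (fun a b c => act (S a) (act b (T (act (S c) w)))).
  by split=> * /=; lintac hH hM.
transitivity (\sum_(q <- Delta h) \sum_(r <- Delta q.2)
                 act (S q.1) (act r.1 (T (act (S r.2) w)))).
  by apply: eq_bigr => q _; rewrite /Th (lin_sum (hmod_linr hM _)).
rewrite -(coassoc_sum hH h tri) /=.
transitivity (\sum_(p <- Delta h) eps p.1 *: T (act (S p.2) w)).
  by apply: eq_bigr => p _; rewrite (anti_act hH hM).
rewrite -{2}(counit_l hH h) (lin_sum (S_linP hH)) (act_suml hM) linear_sum.
by apply: eq_bigr => p _; rewrite (linZ (S_linP hH)) (actZl hM) linearZ.
Qed.

Lemma keylem (k : fieldType) (H : algType k) Delta eps (S : H -> H)
  (M : lmodType k) (act : H -> M -> M) (T : proj M) :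
  is_hopf Delta eps S -> is_hmod act -> ccond Delta S act T -> forall g y,
  \sum_(p <- Delta g) act (S p.1) (T (act p.2 (T y)))
  = T (\sum_(p <- Delta g) act (S p.1) (T (act p.2 y))).
Proof.
move=> hH hM cc g y.
have tri : trilin (fun a b c => act (S a) (Th Delta S act T b (T (act c y)))).
  split=> * /=.
  - by rewrite (S_lin hH) (hmod_linl hM).
  - by rewrite (Th_linl _ hH hM) (hmod_linr hM).
  - by rewrite (hmod_linl hM) linearP (Th_linr Delta S T _ hM) (hmod_linr hM).
transitivity (\sum_(p <- Delta g) \sum_(q <- Delta p.2)
                 act (S p.1) (Th Delta S act T q.1 (T (act q.2 y)))).
  apply: eq_bigr => p _; rewrite (lemA T hH hM p.2 y) linear_sum (lin_sum (hmod_linr hM _)).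
  by apply: eq_bigr => q _; rewrite cc.
rewrite -(coassoc_sum hH g tri) /= linear_sum.
by apply: eq_bigr => p _; rewrite (lemB _ hH hM).
Qed.

Lemma fvalP' (k : fieldType) (M : lmodType k) (T : proj M) (x : fixT T) : T (fval x) = fval x.
Proof. by have /eqP := fvalP x. Qed.

Lemma Rpmod (k : fieldType) (H : algType k) Delta eps (S : H -> H)
  (M : lmodType k) (act : H -> M -> M) (T : proj M) :
  is_hopf Delta eps S -> is_hmod act -> ccond Delta S act T ->
  is_pmod Delta S (piT act T).
Proof.
move=> hH hM cc; split.
- move=> a h h' x; apply: val_inj => /=.
  by rewrite (hmod_linl hM) linearP.
- move=> h a x y; apply: val_inj => /=.
  by rewrite (hmod_linr hM) linearP.
- by move=> x; apply: val_inj => /=; rewrite (hmod_1 hM) fvalP'.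
- move=> h g x; apply: val_inj; rewrite /= !fval_sum /=.
  have Tx := fvalP' x; set x0 := fval x in Tx *.
  have cg := cc g x0; rewrite Tx in cg.
  transitivity (T (act h (T (Th Delta S act T g x0)))).
    by rewrite /Th linear_sum (lin_sum (hmod_linr hM h)) linear_sum.
  rewrite -cg /Th (lin_sum (hmod_linr hM h)) linear_sum.
  by apply: eq_bigr => p _; rewrite (hmod_mul hM).
- move=> h g x; apply: val_inj; rewrite /= !fval_sum /=.
  set x0 := fval x.
  transitivity (T (Th Delta S act T h (T (act g x0)))).
    by rewrite /Th linear_sum.
  rewrite cc pidem /Th linear_sum.
  by apply: eq_bigr => p _; rewrite (hmod_mul hM).
- move=> h g x; apply: val_inj; rewrite /= !fval_sum /=.
  have Tx := fvalP' x; set x0 := fval x in Tx *.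
  have kg := keylem hH hM cc g x0; rewrite Tx in kg.
  transitivity (T (act h (T (\sum_(p <- Delta g) act (S p.1) (T (act p.2 x0)))))).
    by rewrite linear_sum (lin_sum (hmod_linr hM h)) linear_sum.
  rewrite -kg (lin_sum (hmod_linr hM h)) linear_sum.
  by apply: eq_bigr => p _; rewrite (hmod_mul hM).
- move=> h g x; apply: val_inj; rewrite /= !fval_sum /=.
  set x0 := fval x.
  transitivity (T (\sum_(p <- Delta h) act (S p.1) (T (act p.2 (T (act g x0)))))).
    by rewrite linear_sum.
  rewrite (keylem hH hM cc) pidem linear_sum.
  by apply: eq_bigr => p _; rewrite (hmod_mul hM).
Qed.

Unset Implicit Arguments.
Set Strict Implicit.

Theorem mainTheorem8 (k : fieldType) (H : algType k)
  (Delta : H -> seq (H * H)) (eps : H -> k) (S : H -> H) :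
  is_hopf Delta eps S -> bijective S ->
  (* ---- I : _H M -> T(_H M) is a functor: I(M) = (M, id_M), I(f) = f *)
  (forall (M : lmodType k) (act : H -> M -> M),
     is_hmod act -> ccond Delta S act (idproj M)) /\
  (forall (M N : lmodType k) (actM : H -> M -> M) (actN : H -> N -> N) (f : M -> N),
     is_hmod actM -> is_hmod actN -> is_hmor actM actN f ->
     is_Tmor actM actN (idproj M) (idproj N) (Imor f)) /\
  (forall (M : lmodType k), Imor (@idfun M) =1 idfun) /\
  (forall (M N P : lmodType k) (f : M -> N) (g : N -> P),
     Imor (g \o f) =1 Imor g \o Imor f) /\
  (* ---- I is fully faithful *)
  (forall (M N : lmodType k) (actM : H -> M -> M) (actN : H -> N -> N),
     is_hmod actM -> is_hmod actN ->
     (forall f g : M -> N, is_hmor actM actN f -> is_hmor actM actN g ->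
        Imor f =1 Imor g -> f =1 g) /\
     (forall F : fixT (idproj M) -> fixT (idproj N),
        is_Tmor actM actN (idproj M) (idproj N) F ->
        exists f : M -> N, is_hmor actM actN f /\ F =1 Imor f)) /\
  (* ---- R : T(_H M) -> _H M^par is a functor: R(M,T) = (T(M), pi_T), R(f) = f *)
  (forall (M : lmodType k) (act : H -> M -> M) (T : proj M),
     is_hmod act -> ccond Delta S act T -> is_pmod Delta S (piT act T)) /\
  (forall (M N : lmodType k) (actM : H -> M -> M) (actN : H -> N -> N)
          (T : proj M) (T' : proj N) (F : fixT T -> fixT T'),
     is_hmod actM -> is_hmod actN -> ccond Delta S actM T -> ccond Delta S actN T' ->
     is_Tmor actM actN T T' F -> is_pmor (piT actM T) (piT actN T') (Rmor T T' F)) /\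
  (forall (M : lmodType k) (T : proj M), Rmor T T (@idfun (fixT T)) =1 idfun) /\
  (forall (M N P : lmodType k) (T : proj M) (T' : proj N) (T'' : proj P)
          (F : fixT T -> fixT T') (G : fixT T' -> fixT T''),
     Rmor T T'' (G \o F) =1 Rmor T' T'' G \o Rmor T T' F) /\
  (* ---- R is fully faithful *)
  (forall (M N : lmodType k) (actM : H -> M -> M) (actN : H -> N -> N)
          (T : proj M) (T' : proj N),
     is_hmod actM -> is_hmod actN -> ccond Delta S actM T -> ccond Delta S actN T' ->
     (forall F G : fixT T -> fixT T',
        is_Tmor actM actN T T' F -> is_Tmor actM actN T T' G ->
        Rmor T T' F =1 Rmor T T' G -> F =1 G) /\
     (forall G : fixT T -> fixT T',
        is_pmor (piT actM T) (piT actN T') G ->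
        exists F, is_Tmor actM actN T T' F /\ G =1 Rmor T T' F)) /\
  (* ---- i = R o I, under the identification id_M(M) = M given by fval *)
  (forall (M : lmodType k) (act : H -> M -> M),
     is_hmod act ->
     [/\ bijective (@fval k M (idproj M)), lin (@fval k M (idproj M)) &
         forall h (x : fixT (idproj M)),
           fval (piT act (idproj M) h x) = act h (fval x)]) /\
  (forall (M N : lmodType k) (actM : H -> M -> M) (actN : H -> N -> N) (f : M -> N),
     is_hmod actM -> is_hmod actN -> is_hmor actM actN f ->
     forall x : fixT (idproj M),
       fval (Rmor (idproj M) (idproj N) (Imor f) x) = f (fval x)).
Proof.
move=> hH _.
split; first by move=> M act hM h m.
split.
  move=> M N actM actN f hM hN [lf hf]; split.
    by move=> a x y; apply: val_inj => /=; exact: lf.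
  by move=> h x /=; exact: hf.
split; first by move=> M x; apply: val_inj.
split; first by move=> M N P f g x; apply: val_inj.
split.
  move=> M N actM actN hM hN; split.
    by move=> f g _ _ E m; have := congr1 (@fval _ _ _) (E (mkfixid m)).
  move=> F [lF hF]; exists (fun m => fval (F (mkfixid m))); split.
    split.
      move=> a u u'.
      have -> : mkfixid (a *: u + u') = a *: mkfixid u + mkfixid u' by apply: val_inj.
      by rewrite lF.
    move=> h m.
    have -> : mkfixid (actM h m) = piT actM (idproj M) h (mkfixid m) by apply: val_inj.
    exact: hF.
  move=> x; apply: val_inj => /=.
  by have -> : mkfixid (fval x) = x by apply: val_inj.
split; first by move=> M act T hM cc; exact: Rpmod hH hM cc.
split.
  move=> M N actM actN T T' F hM hN cM cN [lF hF]; split => // h x.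
  by apply: val_inj; exact: hF.
split; first by [].
split; first by [].
split.
  move=> M N actM actN T T' hM hN cM cN; split.
    by move=> F G _ _ E.
  move=> G [lG hG]; exists G; split => //; split => // h x.
  by rewrite hG.
split.
  move=> M act hM; split => //.
  by exists (@mkfixid k M) => // x; apply: val_inj.
by [].
Qed.
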